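(* In a public goods economy (as in the context), let $\mathbf{a}$ be an outcome and suppose there is a path $P$ of outcomes with endpoints $\mathbf{x},\mathbf{y}$ such that $\mathbf{u}(\mathbf{p})\le\mathbf{u}(\mathbf{a})$ for every $\mathbf{p}\in P$. If $\mathbf{a}'$ is a deviation from $\mathbf{a}$ for some coalition $C$ satisfying $\mathbf{a}'\lneq\mathbf{x}$, then $\mathbf{a}'$ also satisfies $\mathbf{a}'\lneq\mathbf{y}$.
   Context: Agents $N=\{1,\dots,n\}$; outcomes are vectors in $[0,1]^n$. Vector orderings: $\mathbf{x}\ge\mathbf{y}$ means $x_i\ge y_i$ for all $i$; $\mathbf{x}>\mathbf{y}$ means $x_i>y_i$ for all $i$; $\mathbf{x}\gneq\mathbf{y}$ means $\mathbf{x}\ge\mathbf{y}$ and $x_j>y_j$ for some $j$ ($\mathbf{x}\lneq\mathbf{y}$ means $\mathbf{y}\gneq\mathbf{x}$). For $C\subseteq N$, $\mathbf{v}_C$ is the restriction of $\mathbf{v}$ to coordinates in $C$. The utility function $\mathbf{u}:[0,1]^n\to[0,1]^n$ is continuous, concave, and has positive externalities: whenever $\mathbf{a}\gneq\mathbf{a}'$ and $a_i=a'_i$, then $u_i(\mathbf{a})>u_i(\mathbf{a}')$. A coalition is a nonempty $C\subseteq N$; $\mathbf{a}'$ is a deviation from $\mathbf{a}$ for $C$ if $\mathbf{a}'_{N\setminus C}=\mathbf{0}$ and $\mathbf{u}_C(\mathbf{a}')>\mathbf{u}_C(\mathbf{a})$. A path with endpoints $\mathbf{x},\mathbf{y}$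 is the image of a continuous $f:[0,1]\to[0,1]^n$ with $f(0)=\mathbf{x}$, $f(1)=\mathbf{y}$. *)

(* Defs.v *)
From HB Require Import structures.
From mathcomp Require Import all_boot all_order all_algebra.
From mathcomp Require Import all_classical all_reals all_analysis.
Set Implicit Arguments. Unset Strict Implicit. Unset Printing Implicit Defensive.
Import Order.TTheory GRing.Theory Num.Theory.
Import numFieldNormedType.Exports.
Local Open Scope ring_scope.
Local Open Scope classical_set_scope.

(* Outcomes: row vectors 'rV[R]_n; coordinate of agent i (i : 'I_n) is x ord0 i. *)
Section Defs.
Variables (R : realType) (n : nat).
Local Notation vec := 'rV[R]_n.

Definition in_cube (x : vec) : Prop := forall i, 0 <= x ord0 i <= 1.

Definition vge (x y : vec) : Prop := forall i, y ord0 i <= x ord0 i.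
Definition vgt (x y : vec) : Prop := forall i, y ord0 i < x ord0 i.
Definition vgneq (x y : vec) : Prop := vge x y /\ exists j, y ord0 j < x ord0 j.
Definition vlneq (x y : vec) : Prop := vgneq y x.

Definition vgt_on (C : {set 'I_n}) (x y : vec) : Prop :=
  forall i, i \in C -> y ord0 i < x ord0 i.

Definition continuous_on_cube (u : vec -> vec) : Prop :=
  {within [set x | in_cube x], continuous u}.

Definition concave_on_cube (u : vec -> vec) : Prop :=
  forall (a b : vec) (t : R), in_cube a -> in_cube b -> 0 <= t <= 1 ->
    forall i, t * u a ord0 i + (1 - t) * u b ord0 i <=
      u (\row_k (t * a ord0 k + (1 - t) * b ord0 k)) ord0 i.

Definition positive_externalities (u : vec -> vec) : Prop :=
  forall (a a' : vec) (i : 'I_n), in_cube a -> in_cube a' ->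
    vgneq a a' -> a ord0 i = a' ord0 i -> u a' ord0 i < u a ord0 i.

Definition utility (u : vec -> vec) : Prop :=
  (forall x, in_cube x -> in_cube (u x)) /\
  continuous_on_cube u /\ concave_on_cube u /\ positive_externalities u.

Definition deviation (u : vec -> vec) (C : {set 'I_n}) (a a' : vec) : Prop :=
  C != finset.set0 /\ in_cube a' /\ (forall i, i \notin C -> a' ord0 i = 0) /\
  vgt_on C (u a') (u a).

Definition is_path (P : set vec) (x y : vec) : Prop :=
  exists f : R -> vec,
    {within `[0%R, 1%R], continuous f} /\
    (forall t, 0 <= t <= 1 -> in_cube (f t)) /\
    f 0 = x /\ f 1 = y /\ P = f @` `[0%R, 1%R].
End Defs.
Notation vec R n := 'rV[R]_n (only parsing).

(* Main.v *)
Require Import Defs.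
From HB Require Import structures.
From mathcomp Require Import all_boot all_order all_algebra.
From mathcomp Require Import all_classical all_reals all_analysis.
Import Order.TTheory GRing.Theory Num.Theory.
Import numFieldNormedType.Exports.
Local Open Scope ring_scope.
Local Open Scope classical_set_scope.

Set Implicit Arguments.
Section Aux.
Variables (R : realType) (n : nat) (b : 'rV[R]_n).

Definition Gm (s : seq 'I_n) (v : 'rV[R]_n) : R :=
  \big[Order.min/1]_(i <- s) (v ord0 i - b ord0 i).

Lemma Gm_cont s : continuous (Gm s).
Proof.
elim: s => [|j s IH].
  rewrite /Gm => v; rewrite (_ : (fun _ => _) = fun=> 1); last first.
    by apply/funext => w; rewrite big_nil.
  exact: cst_continuous.
move=> v.
rewrite (_ : Gm (j :: s) = (fun w : 'rV[R]_n => w ord0 j - b ord0 j) \min (Gm s)); last first.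
  by apply/funext => w; rewrite /Gm big_cons.
apply: continuous_min; last exact: IH.
apply: (@continuousB _ _ _ (fun w : 'rV[R]_n => w ord0 j) (fun=> b ord0 j)); last exact: cst_continuous.
exact: coord_continuous.
Qed.

Lemma Gm_gt0 s v : (0 < Gm s v) <-> (forall i, i \in s -> b ord0 i < v ord0 i).
Proof.
elim: s => [|j s IH]; rewrite /Gm ?big_nil ?big_cons.
  by split => // _; exact: ltr01.
rewrite lt_min subr_gt0 -/(Gm s v); split.
  move=> /andP[h1 /IH h2] i; rewrite inE => /orP[/eqP->//|]; exact: h2.
move=> h; apply/andP; split; first by apply: h; rewrite inE eqxx.
by apply/IH => i hi; apply: h; rewrite inE hi orbT.
Qed.

Lemma Gm_ge0 s v : (0 <= Gm s v) <-> (forall i, i \in s -> b ord0 i <= v ord0 i).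
Proof.
elim: s => [|j s IH]; rewrite /Gm ?big_nil ?big_cons.
  by split => // _; exact: ler01.
rewrite le_min subr_ge0 -/(Gm s v); split.
  move=> /andP[h1 /IH h2] i; rewrite inE => /orP[/eqP->//|]; exact: h2.
move=> h; apply/andP; split; first by apply: h; rewrite inE eqxx.
by apply/IH => i hi; apply: h; rewrite inE hi orbT.
Qed.
End Aux.

Theorem lemma2 (R : realType) (n : nat) (u : vec R n -> vec R n)
  (hu : utility u) (a : vec R n) (ha : in_cube a)
  (P : set (vec R n)) (x y : vec R n) (hP : is_path P x y)
  (hPa : forall p, P p -> vge (u a) (u p))
  (C : {set 'I_n}) (a' : vec R n) (hdev : deviation u C a a')
  (hx : vlneq a' x) :
  vlneq a' y.
Proof.
case: hu => _ [_ [_ hpe]].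
case: hP => f [fc [fcube [f0 [f1 Pdef]]]].
case: hdev => Cne [a'cube [a'out hgt]].
case: hx => xge _.
set G := @Gm R n a' (enum C).
have inC i : (i \in enum C) = (i \in C) by rewrite mem_enum.
have K : forall t, 0 <= t <= 1 -> 0 <= G (f t) -> 0 < G (f t).
  move=> t ht /Gm_ge0 hge; apply/Gm_gt0 => i; rewrite inC => iC.
  have Pp : P (f t) by rewrite Pdef; exists t => //; rewrite in_itv.
  have hle := hge i; rewrite inC in hle; have {}hle := hle iC.
  rewrite lt_neqAle hle andbT; apply/negP => /eqP heq.
  have pge : vge (f t) a'.
    move=> k; case: (boolP (k \in C)) => kC.
      by have := hge k; rewrite inC => /(_ kC).
    by rewrite a'out //; by case/andP: (fcube t ht k).
  have h1 := hgt i iC.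
  have h2 := hPa _ Pp i.
  case: (pselect (exists j, a' ord0 j < f t ord0 j)) => [ex|nex].
    have h3 := hpe (f t) a' i (fcube t ht) a'cube (conj pge ex) (esym heq).
    by have := lt_le_trans h3 h2; rewrite ltNge (ltW h1).
  have eq : f t = a'.
    apply/matrixP => r c; rewrite (ord1 r); apply/eqP; rewrite eq_le pge andbT.
    by rewrite leNgt; apply/negP => hc; apply: nex; exists c.
  by move: h2; rewrite eq => h2; have := lt_le_trans h1 h2; rewrite ltxx.
have G0 : 0 < G (f 0).
  apply: K; first by rewrite lexx ler01.
  by apply/Gm_ge0 => i _; rewrite f0; exact: xge.
have G1 : 0 < G (f 1).
  case: (leP 0 (G (f 1))) => h; first by apply: K => //; rewrite ler01 lexx.
  have Gc : {within `[0, 1], continuous (G \o f)}.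
    apply: within_continuous_comp => //; move=> z _; exact: Gm_cont.
  have := @IVT R (G \o f) 0 1 0 ler01 Gc.
  case.
    rewrite /= ge_min le_max (ltW h) (ltW G0) orbT; done.
  move=> c; rewrite in_itv /= => hc /= hc0.
  by have := K c hc; rewrite hc0 lexx ltxx => /(_ isT).
split.
  move=> k; case: (boolP (k \in C)) => kC.
    by apply: ltW; move/Gm_gt0: G1 => /(_ k); rewrite inC -f1 => /(_ kC).
  have h01 : 0 <= (1:R) <= 1 by rewrite ler01 lexx.
  rewrite a'out // -f1. have := fcube 1 h01 k. by case/andP.
case/set0Pn: Cne => j jC; exists j.
by move/Gm_gt0: G1 => /(_ j); rewrite inC -f1 => /(_ jC).
Qed.
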